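(* Let $p$ be a prime and $0\le\ell<p$. Then \[S_\ell^{*0}-S_\ell^*=(-1)^\ell.\]
   Context: For $u\in\mathbb{F}_p$ and $0\le\ell<p$, $S_\ell^*(u)=\{S\subseteq\mathbb{F}_p^* \mid \#S=\ell,\ \sum_{s\in S}s=u\}$, where $\mathbb{F}_p^*=\mathbb{F}_p\setminus\{0\}$ and sums are in $\mathbb{F}_p$. The cardinality $\#S_\ell^*(u)$ does not depend on $u\in\mathbb{F}_p^*$; this common value is denoted $S_\ell^*$. Also $S_\ell^{*0}:=\#S_\ell^*(0)$ (so e.g. $S_0^{*0}=1$, $S_0^*=0$). *)

(* Defs.v *)
From mathcomp Require Import all_boot all_algebra.
Set Implicit Arguments. Unset Strict Implicit. Unset Printing Implicit Defensive.
Import GRing.Theory.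
Local Open Scope ring_scope.

Definition Sstar_set (p : nat) (l : nat) (u : 'F_p) : {set {set 'F_p}} :=
  [set S : {set 'F_p} | [&& (0 : 'F_p) \notin S, #|S| == l :> nat & \sum_(s in S) s == u]].

Definition Sstar_card (p : nat) (l : nat) (u : 'F_p) : nat := #|Sstar_set l u|.

(* Main.v *)
Require Import Defs.
From mathcomp Require Import all_boot all_algebra.
Import GRing.Theory.
From mathcomp Require Import ring.

Section S.
Variable p : nat.
Hypothesis hp : prime p.
Local Open Scope ring_scope.

Definition T (l : nat) (u : 'F_p) : {set {set 'F_p}} :=
  [set S : {set 'F_p} | (#|S| == l) && (\sum_(s in S) s == u)].

Definition tr (t : 'F_p) (S : {set 'F_p}) : {set 'F_p} := [set x + t | x in S].

Lemma tr_inj t : injective (tr t).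
Proof.
move=> A B eq.
have K : forall C, tr (- t) (tr t C) = C.
  move=> C; rewrite /tr -imset_comp.
  apply/setP=> x; apply/imsetP/idP.
    by case=> y yC ->; rewrite /= addrK.
  by move=> xC; exists x => //=; rewrite addrK.
by rewrite -(K A) eq K.
Qed.

Lemma card_tr t S : #|tr t S| = #|S|.
Proof. by apply: card_in_imset => x y _ _ /addIr. Qed.

Lemma sum_tr t S : \sum_(s in tr t S) s = \sum_(s in S) s + t *+ #|S|.
Proof.
rewrite /tr big_imset /=; last by move=> x y _ _ /addIr.
by rewrite big_split /= sumr_const.
Qed.

Lemma T_le l u v : (0 < l < p)%N -> (#|T l u| <= #|T l v|)%N.
Proof.
move=> /andP[l0 lp].
have ln0 : (l%:R : 'F_p) != 0.
  rewrite -(dvdn_pcharf (pchar_Fp hp)).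
  by apply/negP=> /(dvdn_leq l0); rewrite leqNgt lp.
set t := (v - u) / l%:R.
rewrite -(card_in_imset (f := tr t) (D := T l u)); last by move=> A B _ _ /tr_inj.
apply: subset_leq_card; apply/subsetP=> B /imsetP[A].
rewrite inE => /andP[/eqP cA /eqP sA] ->.
rewrite inE card_tr cA eqxx sum_tr sA cA /=.
by rewrite -mulr_natr /t divfK // addrC subrK.
Qed.

Lemma T_eq l u v : (0 < l < p)%N -> #|T l u| = #|T l v|.
Proof. by move=> h; apply/eqP; rewrite eqn_leq !T_le. Qed.

Lemma T_split l u : #|T l.+1 u| = (Sstar_card l.+1 u + Sstar_card l u)%N.
Proof.
rewrite -(cardsID [set S : {set 'F_p} | (0 : 'F_p) \in S] (T l.+1 u)).
rewrite addnC; congr (_ + _)%N.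
  rewrite /Sstar_card /Sstar_set; apply: eq_card => S.
  by rewrite !inE andbC.
rewrite /Sstar_card -(card_in_imset (f := fun S => (0 : 'F_p) |: S) (D := Sstar_set l u)).
  apply: eq_card => S; rewrite !inE; apply/andP/imsetP.
    case=> /andP[/eqP cS /eqP sS] S0.
    exists (S :\ 0).
      rewrite !inE eqxx /=.
      have := cardsD1 0 S; rewrite S0 cS /= add1n => -[->]; rewrite eqxx /=.
      by rewrite -sS (big_setD1 0 S0) /= add0r eqxx.
    by rewrite setD1K.
  case=> A; rewrite inE => /and3P[A0 /eqP cA /eqP sA] ->.
  rewrite setU11 cardsU1 A0 cA big_setU1 //= add0r sA !eqxx; split => //.
move=> A B; rewrite !inE => /and3P[A0 _ _] /and3P[B0 _ _] eq.
by rewrite -(setU1K A0) eq setU1K.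
Qed.

Lemma S0 u : @Sstar_card p 0 u = (u == 0 : nat).
Proof.
rewrite /Sstar_card.
have -> : Sstar_set 0 u = if u == 0 then [set set0] else set0.
  apply/setP=> S; rewrite /Sstar_set !inE cards_eq0.
  case: (S =P set0) => [->|nS] /=; last first.
    rewrite andbF; case: eqP => _; rewrite ?inE //; apply/esym/negbTE/eqP.
  exact: nS.
  rewrite inE big_set0 /=.
  by case: (u =P 0) => [->|/eqP h]; rewrite ?inE ?eqxx // eq_sym (negbTE h).
by case: eqP => _; rewrite ?cards1 ?cards0.
Qed.

End S.

Theorem proposition5 (p l : nat) (hp : prime p) (hl : (l < p)%N)
  (u : 'F_p) (hu : u != 0%R) :
  ((@Sstar_card p l 0%R)%:Z - (Sstar_card l u)%:Z = (-1) ^+ l)%R.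
Proof.
elim: l hl => [|l IH] hl.
  by rewrite !(@S0 p) eqxx (negbTE hu).
have := @T_eq p hp l.+1 0%R u; rewrite ltn0Sn hl => /(_ isT).
rewrite !T_split => h.
have e : ((Sstar_card l.+1 (0 : 'F_p))%:Z + (Sstar_card l (0:'F_p))%:Z
   = (Sstar_card l.+1 u)%:Z + (Sstar_card l u)%:Z)%R by rewrite -!PoszD h.
rewrite exprS -(IH (ltnW hl)).
move: e; set a := Posz (Sstar_card _ _); set b := Posz (Sstar_card _ _); set c := Posz (Sstar_card _ _); set d := Posz (Sstar_card _ _) => e.
clearbody a b c d.
have -> : a = (c + d - b)%R by rewrite -e; ring.
ring.
Qed.
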